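(* Let $(l,k,b)$ be a suspension triplet for $(X_A,\sigma_A)$. For every $(x,r)\in X^{\mathbb R}_{A,b}$ with $r\ge l(x)$ there exists $(z,s)\in X_A\times\mathbb R$ with $b(z)\le s<l(z)$ such that $(x,r)\sim_{l,k}(z,s)$.
   Context: Let $N>1$ and $A$ an irreducible $N\times N$ $\{0,1\}$-matrix which is not a permutation matrix. $X_A$ is the compact space of sequences $(x_n)_{n\in\mathbb N}$, $x_n\in\{1,\dots,N\}$, $A(x_n,x_{n+1})=1$, with $\sigma_A((x_n)_n)=(x_{n+1})_n$. $\mathbb Z_+$, $\mathbb R_+$ are nonnegative integers/reals. $H^A$ is the quotient of $C(X_A,\mathbb Z)$ by $\{u-u\circ\sigma_A\}$, $H^A_+$ the classes of $\mathbb Z_+$-valued continuous functions; $[f]\in H^A_+$ is an order unit if for every $[u]\in H^A$ some $n\in\mathbb N$ has $n[f]-[u]\in H^A_+$. A suspension triplet is $(l,k,b)$ with $l,k\in C(X_A,\mathbb R_+)$, $b\in C(X_A,\mathbb R)$ such that $c=l-k$ is integer-valued with $[c]$ an order unit, and $l-b$, $k-b\circ\sigma_A$ take values in $\mathbb Z_+$. $X^{\mathbb R}_{A,b}=\{(x,r)\in X_A\times\mathbb R: r\ge b(x)\}$, and $\sim_{l,k}$ is the equivalence relation on it generated by $(x,r)\sim_{l,k}(\sigma_A(x),r-c(x))$ whenever $r\ge l(x)$. *)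

(* Defs.v *)
From Stdlib Require Import Reals ZArith Arith List Relations.
Import ListNotations.
Open Scope R_scope.

(* Symbols are 0..N-1 (the paper uses 1..N); a sequence is a function nat -> nat.
   The {0,1}-matrix A is given by its boolean entries A i j (i,j < N). *)
Definition sq := nat -> nat.

Fixpoint mpow (N : nat) (A : nat -> nat -> bool) (m i j : nat) : nat :=
  match m with
  | O => if Nat.eqb i j then 1%nat else 0%nat
  | S m' => fold_right Nat.add 0%nat
              (map (fun t => (mpow N A m' i t * (if A t j then 1 else 0))%nat) (seq 0 N))
  end.

Definition irreducible (N : nat) (A : nat -> nat -> bool) : Prop :=
  forall i j, (i < N)%nat -> (j < N)%nat -> exists m, (1 <= m)%nat /\ (0 < mpow N A m i j)%nat.

Definition is_perm_matrix (N : nat) (A : nat -> nat -> bool) : Prop :=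
  (forall i, (i < N)%nat -> exists j, (j < N)%nat /\ A i j = true /\
       forall j', (j' < N)%nat -> A i j' = true -> j' = j) /\
  (forall j, (j < N)%nat -> exists i, (i < N)%nat /\ A i j = true /\
       forall i', (i' < N)%nat -> A i' j = true -> i' = i).

Definition in_XA (N : nat) (A : nat -> nat -> bool) (x : sq) : Prop :=
  forall n, (x n < N)%nat /\ A (x n) (x (S n)) = true.

Definition shift (x : sq) : sq := fun n => x (S n).

(* continuity on X_A (product topology = agreement on initial segments) *)
Definition contR (N : nat) (A : nat -> nat -> bool) (f : sq -> R) : Prop :=
  forall x, in_XA N A x -> forall eps, 0 < eps -> exists n, forall y, in_XA N A y ->
    (forall i, (i < n)%nat -> y i = x i) -> Rabs (f y - f x) < eps.

Definition contZ (N : nat) (A : nat -> nat -> bool) (f : sq -> Z) : Prop :=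
  forall x, in_XA N A x -> exists n, forall y, in_XA N A y ->
    (forall i, (i < n)%nat -> y i = x i) -> f y = f x.

Definition in_HAplus (N : nat) (A : nat -> nat -> bool) (f : sq -> Z) : Prop :=
  exists g h : sq -> Z, contZ N A g /\ contZ N A h /\
    forall x, in_XA N A x -> (0 <= g x)%Z /\ f x = (g x + h x - h (shift x))%Z.

Definition order_unit (N : nat) (A : nat -> nat -> bool) (c : sq -> Z) : Prop :=
  forall u : sq -> Z, contZ N A u ->
    exists n : nat, in_HAplus N A (fun x => (Z.of_nat n * c x - u x)%Z).

Definition suspension_triplet (N : nat) (A : nat -> nat -> bool)
    (l k b : sq -> R) (c : sq -> Z) : Prop :=
  contR N A l /\ contR N A k /\ contR N A b /\
  (forall x, in_XA N A x -> 0 <= l x /\ 0 <= k x) /\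
  (forall x, in_XA N A x -> IZR (c x) = l x - k x) /\
  order_unit N A c /\
  (forall x, in_XA N A x -> exists n : nat, l x - b x = INR n) /\
  (forall x, in_XA N A x -> exists n : nat, k x - b (shift x) = INR n).

Definition in_XRAb (N : nat) (A : nat -> nat -> bool) (b : sq -> R) (p : sq * R) : Prop :=
  in_XA N A (fst p) /\ b (fst p) <= snd p.

Definition sim_gen (N : nat) (A : nat -> nat -> bool) (l b : sq -> R) (c : sq -> Z)
    (p q : sq * R) : Prop :=
  in_XRAb N A b p /\ l (fst p) <= snd p /\
  q = (shift (fst p), snd p - IZR (c (fst p))).

Definition sim (N : nat) (A : nat -> nat -> bool) (l b : sq -> R) (c : sq -> Z) :
    relation (sq * R) :=
  clos_refl_sym_trans (sq * R) (sim_gen N A l b c).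

(* Main.v *)
Require Import Defs.
From Stdlib Require Import Reals ZArith Relations.
From Stdlib Require Import Classical ClassicalEpsilon Lia Lra.
Open Scope R_scope.

Definition ext (n : nat) (p y : sq) : Prop := forall i, (i < n)%nat -> y i = p i.
Definition upd (p : sq) (n j : nat) : sq := fun i => if Nat.ltb i n then p i else j.

Section Cpt.
Variables (N : nat) (A : nat -> nat -> bool) (h : sq -> Z).

Definition bad (n : nat) (p : sq) : Prop :=
  forall M, exists y, in_XA N A y /\ ext n p y /\ (M < h y)%Z.

Lemma fin_max (n : nat) (p : sq) :
  (forall j, (j < N)%nat -> ~ bad (S n) (upd p n j)) ->
  forall K, (K <= N)%nat -> exists M, forall j, (j < K)%nat -> forall y,
     in_XA N A y -> ext (S n) (upd p n j) y -> (h y <= M)%Z.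
Proof.
  intros H K. induction K as [|K IH]; intros HK.
  - exists 0%Z. intros; lia.
  - destruct IH as [M1 HM1]; [lia|].
    assert (Hb := H K ltac:(lia)).
    unfold bad in Hb. apply not_all_ex_not in Hb. destruct Hb as [M2 HM2].
    exists (Z.max M1 M2). intros j Hj y Hy He.
    destruct (Nat.eq_dec j K) as [->|Hne].
    + destruct (Z_le_gt_dec (h y) M2); [lia|].
      exfalso; apply HM2; exists y; split; [exact Hy|split; [exact He|lia]].
    + specialize (HM1 j ltac:(lia) y Hy He); lia.
Qed.

Lemma bad_step n p : bad n p -> exists j, (j < N)%nat /\ bad (S n) (upd p n j).
Proof.
  intros Hb. apply NNPP; intro Hn.
  assert (H : forall j, (j < N)%nat -> ~ bad (S n) (upd p n j)).
  { intros j Hj Hb'. apply Hn. eauto. }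
  destruct (fin_max n p H N (le_n _)) as [M HM].
  destruct (Hb M) as [y [Hy [He Hlt]]].
  assert (HyN : (y n < N)%nat) by apply (Hy n).
  assert (h y <= M)%Z; [|lia].
  apply (HM (y n) HyN y Hy).
  intros i Hi. unfold upd. destruct (Nat.ltb_spec i n).
  - apply He; auto.
  - f_equal; lia.
Qed.

Definition choose_next (n : nat) (p : sq) : nat :=
  epsilon (inhabits 0%nat) (fun j => (j < N)%nat /\ bad (S n) (upd p n j)).

Fixpoint P (n : nat) : sq :=
  match n with
  | O => fun _ => 0%nat
  | S n' => upd (P n') n' (choose_next n' (P n'))
  end.

Lemma P_bad : bad 0 (P 0) -> forall n, bad n (P n).
Proof.
  intros H0 n. induction n; auto. simpl.
  destruct (bad_step _ _ IHn) as [j Hj].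
  apply (epsilon_spec (inhabits 0%nat) (fun j => (j < N)%nat /\ bad (S n) (upd (P n) n j))).
  eauto.
Qed.

Lemma P_stable : forall n m i, (i < n)%nat -> (n <= m)%nat -> P m i = P n i.
Proof.
  intros n m i Hi Hm. induction Hm; auto.
  simpl. unfold upd. destruct (Nat.ltb_spec i m); auto. lia.
Qed.

Lemma bounded : contZ N A h -> exists M, forall y, in_XA N A y -> (h y <= M)%Z.
Proof.
  intros Hc. apply NNPP; intro Hn.
  assert (H0 : bad 0 (P 0)).
  { intro M. apply NNPP; intro Hm. apply Hn. exists M. intros y Hy.
    destruct (Z_le_gt_dec (h y) M); auto. exfalso; apply Hm.
    exists y; split; [exact Hy|split; [intros i Hi; lia|lia]]. }
  pose proof (P_bad H0) as HB.
  set (x := fun i => P (S i) i).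
  assert (Hx : forall n, ext n (P n) x).
  { intros n i Hi. unfold x. symmetry. apply P_stable; lia. }
  assert (HxA : in_XA N A x).
  { intro n. destruct (HB (S (S n)) 0%Z) as [y [Hy [He _]]].
    destruct (Hy n) as [Hy1 Hy2].
    assert (E1 : y n = x n) by (rewrite (He n ltac:(lia)); symmetry; apply Hx; lia).
    assert (E2 : y (S n) = x (S n)) by (rewrite (He (S n) ltac:(lia)); symmetry; apply Hx; lia).
    rewrite <- E1, <- E2; auto. }
  destruct (Hc x HxA) as [n0 Hn0].
  destruct (HB n0 (h x)) as [y [Hy [He Hlt]]].
  rewrite (Hn0 y Hy) in Hlt; [lia|].
  intros i Hi. rewrite (He i Hi). symmetry. apply Hx; auto.
Qed.
End Cpt.

Fixpoint shiftn (n : nat) (x : sq) : sq :=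
  match n with O => x | S n' => Defs.shift (shiftn n' x) end.

Fixpoint Ssum (f : sq -> Z) (x : sq) (n : nat) : Z :=
  match n with O => 0%Z | S n' => (Ssum f x n' + f (shiftn n' x))%Z end.

Lemma shiftn_XA N A x n : in_XA N A x -> in_XA N A (shiftn n x).
Proof.
  intros H. induction n; simpl; auto. intro i. apply (IHn (S i)).
Qed.

Theorem lemma2p3 (N : nat) (A : nat -> nat -> bool) (l k b : sq -> R) (c : sq -> Z) :
  (1 < N)%nat -> irreducible N A -> ~ is_perm_matrix N A ->
  suspension_triplet N A l k b c ->
  forall (x : sq) (r : R), in_XRAb N A b (x, r) -> l x <= r ->
  exists (z : sq) (s : R), in_XA N A z /\ b z <= s < l z /\
    sim N A l b c (x, r) (z, s).
Proof.
  intros _ _ _ [Hl [Hk [Hb [Hpos [Hc [Hou [Hlb Hkb]]]]]]] x r Hxr Hlr.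
  apply NNPP; intro Hno.
  assert (Hx : in_XA N A x) by apply Hxr.
  assert (Hind : forall n, in_XRAb N A b (shiftn n x, r - IZR (Ssum c x n))
     /\ sim N A l b c (x, r) (shiftn n x, r - IZR (Ssum c x n))
     /\ l (shiftn n x) <= r - IZR (Ssum c x n)).
  { induction n as [|n [H1 [H2 H3]]].
    - simpl. replace (r - IZR 0) with r by (simpl; ring).
      repeat split; auto; try apply Hxr. apply rst_refl.
    - assert (HXn := shiftn_XA N A x n Hx).
      assert (Hg : sim_gen N A l b c (shiftn n x, r - IZR (Ssum c x n))
                    (shiftn (S n) x, r - IZR (Ssum c x (S n)))).
      { repeat split; auto; try apply H1. simpl. rewrite plus_IZR. f_equal; ring. }
      assert (HS : in_XRAb N A b (shiftn (S n) x, r - IZR (Ssum c x (S n)))).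
      { split; [apply (shiftn_XA N A x (S n) Hx)|]. simpl.
        rewrite plus_IZR, (Hc _ HXn).
        destruct (Hkb _ HXn) as [m Hm]. pose proof (pos_INR m). lra. }
      assert (Hsim : sim N A l b c (x, r) (shiftn (S n) x, r - IZR (Ssum c x (S n)))).
      { eapply rst_trans; [exact H2|]. apply rst_step; exact Hg. }
      repeat split; auto; try apply HS.
      destruct (Rle_dec (l (shiftn (S n) x)) (r - IZR (Ssum c x (S n)))) as [|Hlt]; auto.
      exfalso; apply Hno. exists (shiftn (S n) x), (r - IZR (Ssum c x (S n))).
      repeat split; auto; try apply HS. lra. }
  destruct (Hou (fun _ => 1%Z)) as [m [g [h [Hg [Hh Hgh]]]]].
  { intros y _. exists 0%nat. auto. }
  destruct (bounded N A h Hh) as [M HM].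
  assert (Htel : forall n, (Z.of_nat m * Ssum c x n - Z.of_nat n
                 = Ssum g x n + h x - h (shiftn n x))%Z).
  { induction n; simpl; [lia|].
    destruct (Hgh _ (shiftn_XA N A x n Hx)) as [_ He]. lia. }
  assert (Hgpos : forall n, (0 <= Ssum g x n)%Z).
  { induction n; simpl; [lia|].
    destruct (Hgh _ (shiftn_XA N A x n Hx)) as [He _]. lia. }
  assert (Hbd : forall n, IZR (Ssum c x n) <= r).
  { intro n. destruct (Hind n) as [_ [_ H3]].
    destruct (Hpos _ (shiftn_XA N A x n Hx)). lra. }
  assert (Hz : forall n, (Z.of_nat n + h x - M <= Z.of_nat m * Ssum c x n)%Z).
  { intro n. specialize (Htel n). specialize (Hgpos n).
    specialize (HM _ (shiftn_XA N A x n Hx)). lia. }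
  destruct (INR_archimed 1 (INR m * r + IZR M - IZR (h x)) ltac:(lra)) as [n Hn].
  specialize (Hz n). apply IZR_le in Hz.
  rewrite mult_IZR, !minus_IZR, plus_IZR, <- !INR_IZR_INZ in Hz.
  specialize (Hbd n). pose proof (pos_INR m).
  assert (INR m * IZR (Ssum c x n) <= INR m * r) by (apply Rmult_le_compat_l; auto).
  lra.
Qed.
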